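(* Let $P$ be a finite ranked poset with unique minimal element and with the non-nesting property, such that $|S(p)|>1$ whenever $p$ has rank greater than $1$. If $Q$ is a finite ranked poset with unique minimal element such that $Q\sim_BP$, then $P_{\ge2}\cong Q_{\ge2}$ as (ranked) posets.
   Context: A ranked poset has a rank function with $|x|=|y|+1$ whenever $x$ covers $y$ and $|x|=0$ iff $x$ is minimal. Its Hasse diagram is the layered graph with layers $P_i=\{p:|p|=i\}$ and an edge $(p,q)$ for each covering relation $p\gtrdot q$; $S(p)$ is the set of elements covered by $p$, and $P_{\ge j}=\bigcup_{i\ge j}P_i$ with the induced order. For a layered graph with vertex set $V=\bigsqcup V_i$, $V_+=\bigsqcup_{i\ge1}V_i$, $B(\Gamma)=T(V_+)/R_B$ over a field $\mathbb F$, where $R_B$ is the two-sided ideal generated by $\{vw: v,w\in V_+,(v,w)\notin E\}\cup\{v\sum_{w\in S(v)}w: v\in V_{\ge2}\}$; it is doubly graded with $v_1\cdots v_m$ in bidegree $(m,\sum|v_i|)$. $B(P)$ means $B$ of the Hasse diagram, and $Q\sim_BP$ means there is a doubly graded algebra isomorphism $B(P)\to B(Q)$. $P$ has the non-nesting property if for any two distinct elements $p,q$ each covering more than one element, $S(p)\not\subseteq S(q)$. *)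

(* Defs.v *)
From HB Require Import structures.
From mathcomp Require Import all_boot all_order all_algebra.
Set Implicit Arguments. Unset Strict Implicit. Unset Printing Implicit Defensive.
Import Order.TTheory GRing.Theory.

Definition covers d (P : finPOrderType d) (x y : P) : bool :=
  (y < x)%O && [forall z : P, ~~ ((y < z)%O && (z < x)%O)].

Definition minimal d (P : finPOrderType d) (x : P) : bool :=
  [forall z : P, ~~ (z < x)%O].

Definition is_rank d (P : finPOrderType d) (r : P -> nat) : Prop :=
  (forall x y : P, covers x y -> r x = (r y).+1) /\
  (forall x : P, (r x == 0%N) = minimal x).

Definition unique_minimal d (P : finPOrderType d) : Prop :=
  exists m : P, forall x : P, minimal x = (x == m).

Definition Sset d (P : finPOrderType d) (p : P) : {set P} := [set q | covers p q].

Definition non_nesting d (P : finPOrderType d) : Prop :=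
  forall p q : P, p != q -> (1 < #|Sset p|)%N -> (1 < #|Sset q|)%N ->
    ~~ (Sset p \subset Sset q).

(* ---------- The algebra B(P), presented as T(V_+)/R_B ---------- *)

Definition Vpos d (P : finPOrderType d) (r : P -> nat) := {x : P | (0 < r x)%N}.

(* elements of the free (tensor) algebra T(V) as finite formal sums of words *)
Definition fsum (F : fieldType) (V : Type) := seq (F * seq V).

Definition coef (F : fieldType) (V : eqType) (x : fsum F V) (u : seq V) : F :=
  (\sum_(p <- x) (if p.2 == u then p.1 else 0))%R.

Definition fscale (F : fieldType) (V : Type) (k : F) (x : fsum F V) : fsum F V :=
  [seq ((k * p.1)%R, p.2) | p <- x].

(* a * g * b for words a, b *)
Definition sandwich (F : fieldType) (V : Type) (a : seq V) (g : fsum F V) (b : seq V)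
  : fsum F V := [seq (p.1, a ++ p.2 ++ b) | p <- g].

(* generators of the ideal R_B of the Hasse diagram of P *)
Definition is_gen (F : fieldType) d (P : finPOrderType d) (r : P -> nat)
  (g : fsum F (Vpos r)) : Prop :=
  (exists v w : Vpos r, ~~ covers (val v) (val w) /\ g = [:: (1%R, [:: v; w])]) \/
  (exists v : Vpos r, (2 <= r (val v))%N /\
     g = [seq (1%R, [:: v; w]) | w <- enum [pred w : Vpos r | covers (val v) (val w)]]).

(* membership of an element (given by its coefficient function) in the
   two-sided ideal R_B generated by the generators above *)
Definition in_ideal (F : fieldType) d (P : finPOrderType d) (r : P -> nat)
  (f : seq (Vpos r) -> F) : Prop :=
  exists L : seq (F * seq (Vpos r) * fsum F (Vpos r) * seq (Vpos r)),
    (forall i, (i < size L)%N -> is_gen (nth (0%R, [::], [::], [::]) L i).1.2) /\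
    forall u, f u = coef (flatten [seq fscale t.1.1.1 (sandwich t.1.1.2 t.1.2 t.2) | t <- L]) u.

Definition eqB (F : fieldType) d (P : finPOrderType d) (r : P -> nat)
  (x y : fsum F (Vpos r)) : Prop :=
  in_ideal (coef (x ++ fscale (-1)%R y)).

(* the algebra homomorphism T(V) -> T(W) sending each generator v to
   sum_w c v w * w *)
Definition hom_word (F : fieldType) (V W : finType) (c : V -> W -> F) (a : seq V)
  : fsum F W :=
  foldr (fun v acc => [seq ((c v w * q.1)%R, w :: q.2) | w <- enum W, q <- acc])
        [:: (1%R, [::])] a.

Definition hom (F : fieldType) (V W : finType) (c : V -> W -> F) (x : fsum F V)
  : fsum F W :=
  flatten [seq fscale p.1 (hom_word c p.2) | p <- x].

(* Q ~_B P : there is a doubly graded algebra isomorphism B(P) -> B(Q).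
   It is given by the images of the generators (c), with inverse given by c'. *)
Definition B_iso (F : fieldType) d (P : finPOrderType d) (rP : P -> nat)
  d' (Q : finPOrderType d') (rQ : Q -> nat) : Prop :=
  exists (c : Vpos rP -> Vpos rQ -> F) (c' : Vpos rQ -> Vpos rP -> F),
    (* doubly graded: generator of bidegree (1,i) goes to bidegree (1,i) *)
    (forall v w, rP (val v) != rQ (val w) -> c v w = 0%R) /\
    (forall w v, rQ (val w) != rP (val v) -> c' w v = 0%R) /\
    (* well defined on the quotients *)
    (forall x, in_ideal (coef x) -> in_ideal (coef (hom c x))) /\
    (forall y, in_ideal (coef y) -> in_ideal (coef (hom c' y))) /\
    (forall v, eqB (hom c' (hom c [:: (1%R, [:: v])])) [:: (1%R, [:: v])]) /\
    (forall w, eqB (hom c (hom c' [:: (1%R, [:: w])])) [:: (1%R, [:: w])]).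

Definition Pge2 d (P : finPOrderType d) (r : P -> nat) := {x : P | (2 <= r x)%N}.

(* Main.v *)
Require Import Defs.
From HB Require Import structures.
From mathcomp Require Import all_boot all_order all_algebra zify ring.
Set Implicit Arguments. Unset Strict Implicit. Unset Printing Implicit Defensive.
Import Order.TTheory GRing.Theory.

Section Coef.
Local Open Scope ring_scope.
Variables (F : fieldType) (V : eqType).

Lemma coef_cat (x y : fsum F V) u : coef (x ++ y) u = coef x u + coef y u.
Proof. by rewrite /coef big_cat. Qed.

Lemma coef_nil u : coef ([::] : fsum F V) u = 0.
Proof. by rewrite /coef big_nil. Qed.

Lemma coef_flatten (s : seq (fsum F V)) u :
  coef (flatten s) u = \sum_(x <- s) coef x u.
Proof.
elim: s => [|x s IH] /=; first by rewrite big_nil coef_nil.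
by rewrite coef_cat IH big_cons.
Qed.

Lemma coef_fscale k (x : fsum F V) u : coef (fscale k x) u = k * coef x u.
Proof.
rewrite /coef /fscale big_map mulr_sumr; apply: eq_bigr => p _ /=.
by case: ifP; rewrite ?mulr0.
Qed.

Lemma coef_sandwich (a b : seq V) (g : fsum F V) u :
  coef (sandwich a g b) u = \sum_(p <- g) (if a ++ p.2 ++ b == u then p.1 else 0).
Proof. by rewrite /coef /sandwich big_map. Qed.

Lemma coef_eq0 (x : fsum F V) u : (forall p, p \in x -> p.2 != u) -> coef x u = 0.
Proof.
move=> H; rewrite /coef big_seq big1 // => p /H; by move/negbTE => ->.
Qed.

End Coef.

Section Ideal.
Local Open Scope ring_scope.
Variables (F : fieldType) (d : Order.disp_t) (X : finPOrderType d) (r : X -> nat).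
Local Notation V := (Vpos r).
Local Notation T := (F * seq V * fsum F V * seq V)%type.

Definition GL (L : seq T) : fsum F V :=
  flatten [seq fscale t.1.1.1 (sandwich t.1.1.2 t.1.2 t.2) | t <- L].

Lemma in_idealP (f : seq V -> F) : in_ideal f <->
  exists L : seq T, (forall t, t \in L -> is_gen t.1.2) /\ forall u, f u = coef (GL L) u.
Proof.
split => -[L [H1 H2]]; exists L; split => //.
- by move=> t tL; rewrite -(nth_index (0, [::], [::], [::]) tL); apply: H1; rewrite index_mem.
- by move=> i iL; apply: H1; rewrite mem_nth.
Qed.

Lemma in_ideal_ext (f g : seq V -> F) : f =1 g -> in_ideal f -> in_ideal g.
Proof. by move=> fg [L [H1 H2]]; exists L; split => // u; rewrite -fg. Qed.

Lemma in_ideal0 : in_ideal (fun _ : seq V => 0 : F).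
Proof. by apply/in_idealP; exists [::]; split => // u; rewrite /GL /= coef_nil. Qed.

Lemma in_idealD (f g : seq V -> F) : in_ideal f -> in_ideal g -> in_ideal (fun u => f u + g u).
Proof.
move=> /in_idealP [L1 [H1 H2]] /in_idealP [L2 [H3 H4]].
apply/in_idealP; exists (L1 ++ L2); split.
  by move=> t; rewrite mem_cat => /orP [/H1|/H3].
by move=> u; rewrite /GL map_cat flatten_cat coef_cat H2 H4.
Qed.

Lemma in_ideal_gen k (g : fsum F V) : is_gen g -> in_ideal (fun u => k * coef g u).
Proof.
move=> Hg; apply/in_idealP; exists [:: (k, [::], g, [::])]; split.
  by move=> t; rewrite inE => /eqP ->.
move=> u; rewrite /GL /= cats0 coef_fscale; congr (_ * _).
rewrite coef_sandwich /coef; apply: eq_bigr => p _; by rewrite cats0.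
Qed.

Lemma in_ideal_sum (I : Type) (s : seq I) (f : I -> seq V -> F) :
  (forall i, in_ideal (f i)) -> in_ideal (fun u => \sum_(i <- s) f i u).
Proof.
move=> H; elim: s => [|i s IH].
  by apply: in_ideal_ext in_ideal0 => u; rewrite big_nil.
by apply: in_ideal_ext (in_idealD (H i) IH) => u; rewrite big_cons.
Qed.

Lemma gen_size (g : fsum F V) : is_gen g -> forall p, p \in g -> size p.2 = 2%N.
Proof.
case=> [[v [w [_ ->]]]|[v [_ ->]]] p; first by rewrite inE => /eqP ->.
by case/mapP => w _ ->.
Qed.

Lemma in_ideal_coefE (f : seq V -> F) : in_ideal f -> exists L : seq T,
  (forall t, t \in L -> is_gen t.1.2) /\
  forall u, f u = \sum_(t <- L) t.1.1.1 * coef (sandwich t.1.1.2 t.1.2 t.2) u.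
Proof.
move=> /in_idealP [L [H1 H2]]; exists L; split => // u.
by rewrite H2 /GL coef_flatten big_map; apply: eq_bigr => t _; rewrite coef_fscale.
Qed.

Lemma in_ideal_len1 (f : seq V -> F) : in_ideal f -> forall u, f [:: u] = 0.
Proof.
move=> /in_ideal_coefE [L [H1 H2]] u; rewrite H2 big_seq big1 // => t /H1 Hg.
rewrite coef_sandwich big_seq big1 ?mulr0 // => p /(gen_size Hg) Hp.
case: eqP => // /(congr1 size); rewrite !size_cat Hp /=; lia.
Qed.

End Ideal.

Section Row.
Local Open Scope ring_scope.
Variables (F : fieldType) (d : Order.disp_t) (X : finPOrderType d) (r : X -> nat).
Local Notation V := (Vpos r).

Definition gen1 (v w : V) : fsum F V := [:: (1, [:: v; w])].
Definition gen2 (v : V) : fsum F V :=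
  [seq (1, [:: v; w]) | w <- enum [pred w : V | covers (val v) (val w)]].

Lemma sum_delta (I : finType) (A : {pred I}) (b : I) :
  \sum_(w in A) (if w == b then 1 else 0 : F) = (b \in A)%:R.
Proof.
rewrite big_mkcond (bigD1 b) //= eqxx big1 ?addr0 => [|w /negbTE ->]; last by case: ifP.
by case: (b \in A).
Qed.

Lemma coef_gen1 v w u : coef (gen1 v w) u = ([:: v; w] == u)%:R.
Proof. by rewrite /coef big_seq1 /=; case: eqP. Qed.

Lemma coef_gen2 v a b : coef (gen2 v) [:: a; b] = ((v == a) && covers (val a) (val b))%:R.
Proof.
rewrite /coef /gen2 big_map big_enum /=.
have [<-|va] := eqP; last first.
  by rewrite big1 // => w _; rewrite eqseq_cons (introF eqP va).
rewrite /=; rewrite -(sum_delta [pred w : V | covers (val v) (val w)] b).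
apply: eq_bigr => w _; rewrite eqseq_cons eqxx /=.
by rewrite eqseq_cons andbT.
Qed.

Lemma coef_gen2_size v u : size u != 2%N -> coef (gen2 v) u = 0.
Proof.
move=> su; rewrite coef_eq0 // => p /mapP [w _ ->] /=.
by apply: contra su => /eqP <-.
Qed.

Lemma in_ideal_row (f : seq V -> F) : in_ideal f ->
  forall v w1 w2 : V, covers (val v) (val w1) -> covers (val v) (val w2) ->
  f [:: v; w1] = f [:: v; w2].
Proof.
move=> /in_ideal_coefE [L [H1 H2]] v w1 w2 c1 c2; rewrite !H2.
rewrite big_seq [in RHS]big_seq; apply: eq_bigr => t /H1 Hg; congr (_ * _).
case: t Hg => [[[k a] g] b] /= Hg.
case: a => [|a0 a]; last first.
  rewrite !coef_sandwich !big_seq !big1 // => p /(gen_size Hg) Hp;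
  case: eqP => // /(congr1 size) E; exfalso; move: E; rewrite /= !size_cat Hp /=; lia.
case: b => [|b0 b]; last first.
  rewrite !coef_sandwich !big_seq !big1 // => p /(gen_size Hg) Hp;
  case: eqP => // /(congr1 size) E; exfalso; move: E; rewrite /= !size_cat Hp /=; lia.
have E u : coef (sandwich [::] g [::]) u = coef g u.
  by rewrite coef_sandwich /coef; apply: eq_bigr => p _ /=; rewrite cats0.
rewrite !E.
case: Hg => [[v' [w' [nc ->]]]|[v' [_ ->]]].
  have N w : covers (val v) (val w) -> coef [:: (1 : F, [:: v'; w'])] [:: v; w] = 0.
    move=> cw; rewrite -/(gen1 v' w') coef_gen1; case: eqP => // -[e1 e2].
    by move: nc; rewrite e1 e2 cw.
  by rewrite (N _ c1) (N _ c2).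
by rewrite -/(gen2 v') !coef_gen2 c1 c2.
Qed.

End Row.

Section Row2.
Local Open Scope ring_scope.
Variables (F : fieldType) (d : Order.disp_t) (X : finPOrderType d) (r : X -> nat).
Local Notation V := (Vpos r).

Lemma gen2_is_gen (v w : V) : is_rank r -> covers (val v) (val w) -> is_gen (gen2 F v).
Proof.
move=> [Hr _] cvw; right; exists v; split => //.
by rewrite (Hr _ _ cvw) ltnS (valP w).
Qed.

Lemma ideal_of_row (f : seq V -> F) : is_rank r ->
  (forall u, size u != 2%N -> f u = 0) ->
  (forall v w1 w2 : V, covers (val v) (val w1) -> covers (val v) (val w2) ->
     f [:: v; w1] = f [:: v; w2]) -> in_ideal f.
Proof.
move=> Hr f0 frow.
pose pk (v : V) := [pick w : V | covers (val v) (val w)].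
pose g (v w : V) (u : seq V) := if covers (val v) (val w) then
   (if pk v == Some w then f [:: v; w] * coef (gen2 F v) u else 0)
   else f [:: v; w] * coef (gen1 F v w) u.
have Hg : in_ideal (fun u => \sum_(v : V) \sum_(w : V) g v w u).
  apply: in_ideal_sum => v; apply: in_ideal_sum => w; rewrite /g.
  case cvw: (covers (val v) (val w)); last first.
    by apply: in_ideal_gen; left; exists v, w; rewrite cvw.
  case: (pk v == Some w); last by apply: in_ideal0.
  by apply: in_ideal_gen; apply: (gen2_is_gen Hr cvw).
apply: in_ideal_ext Hg => u /=.
have [Hu|Hu] := eqVneq (size u) 2%N; last first.
  rewrite f0 // big1 // => v _; rewrite big1 // => w _; rewrite /g.
  rewrite coef_gen2_size // coef_gen1 mulr0 (_ : ([:: v; w] == u) = false) ?mulr0.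
    by case: ifP => //; case: ifP.
  by apply/eqP => E; move: Hu; rewrite -E eqxx.
move: Hu; case: u => [|a [|b [|? ?]]] //= _.
rewrite (bigD1 a) //= [X in _ + X]big1 ?addr0 => [|v va]; last first.
  rewrite big1 // => w _; rewrite /g coef_gen2 coef_gen1 eq_sym (negbTE va) /= mulr0.
  rewrite eqseq_cons eq_sym (negbTE va) /= mulr0; by case: ifP => //; case: ifP.
rewrite /g /pk coef_gen2 eqxx /=.
case cab: (covers (val a) (val b)); have cab' : covers (sval a) (sval b) = _ := cab.
  case: (pickP [pred w : V | covers (val a) (val w)]) => [w0 cw0|/(_ b)]; last by rewrite /= cab.
  rewrite (bigD1 w0) //= [X in _ + X]big1 ?addr0 => [|w ww0].
    have cw1 : covers (sval a) (sval w0) := cw0.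
    by rewrite cw1 eqxx mulr1 (frow _ _ _ cw0 cab).
  rewrite coef_gen1 eqseq_cons eqxx /=.
  case: ifP => cw; first by rewrite (inj_eq (@Some_inj _)) eq_sym (negbTE ww0).
  by case: eqP => [[E]|]; [move: cw; rewrite E cab'|rewrite mulr0].
rewrite (bigD1 b) //= [X in _ + X]big1 ?addr0 => [|w wb].
  by rewrite cab' coef_gen1 eqxx mulr1.
rewrite coef_gen1 !eqseq_cons eqxx (negbTE wb) /= !mulr0; by case: ifP => //; case: ifP.
Qed.

End Row2.

Definition tw (F : fieldType) (V : Type) (x y : V -> F) (u : seq V) : F :=
  match u with [:: a; b] => (x a * y b)%R | _ => 0%R end.

Section T1.
Local Open Scope ring_scope.
Variables (F : fieldType) (d : Order.disp_t) (X : finPOrderType d) (r : X -> nat).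
Local Notation V := (Vpos r).

Definition ev (v : V) : V -> F := fun u => (u == v)%:R.
Definition Cond (v : V) (y : V -> F) : Prop := forall w1 w2 : V,
  covers (val v) (val w1) -> covers (val v) (val w2) -> y w1 = y w2.
Definition Z (x y : V -> F) := in_ideal (tw x y).

Lemma Z_cond x y : Z x y -> forall v, x v != 0 -> Cond v y.
Proof.
move=> HZ v xv w1 w2 c1 c2; have := in_ideal_row HZ c1 c2; rewrite /tw.
exact: mulfI.
Qed.

Lemma cond_Z x y : is_rank r -> (forall v, x v != 0 -> Cond v y) -> Z x y.
Proof.
move=> Hr H; apply: ideal_of_row => //.
  by case=> [|a [|b [|? ?]]].
move=> v w1 w2 c1 c2 /=; have [->|xv] := eqVneq (x v) 0; first by rewrite !mul0r.
by rewrite (H v xv w1 w2 c1 c2).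
Qed.

Lemma Cond_ext v y y' : y =1 y' -> Cond v y -> Cond v y'.
Proof. by move=> E H w1 w2 c1 c2; rewrite -!E; apply: H. Qed.

Lemma Cond_scale v y z (l : F) : l != 0 -> (forall b, y b = l * z b) ->
  Cond v y <-> Cond v z.
Proof.
move=> l0 E; split=> H w1 w2 c1 c2; have := H w1 w2 c1 c2; rewrite ?E //.
  exact: mulfI.
by move=> ->.
Qed.

End T1.

Section Hom.
Local Open Scope ring_scope.
Variables (F : fieldType) (V W : finType) (c : V -> W -> F).

Definition app (x : V -> F) : W -> F := fun b => \sum_a c a b * x a.

Lemma size_hom_word a p : p \in hom_word c a -> size p.2 = size a.
Proof.
elim: a p => [|v a IH] p /=; first by rewrite inE => /eqP ->.
by case/allpairsP => -[w q] [_ /IH Hq ->] /=; rewrite Hq.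
Qed.

Lemma coef_hw_size a u : size u != size a -> coef (hom_word c a) u = 0.
Proof.
move=> su; apply: coef_eq0 => p /size_hom_word Hp; apply: contra su => /eqP <-.
by rewrite Hp.
Qed.

Lemma coef_hom (s : fsum F V) u :
  coef (Defs.hom c s) u = \sum_(p <- s) p.1 * coef (hom_word c p.2) u.
Proof.
by rewrite /Defs.hom coef_flatten big_map; apply: eq_bigr => p _; rewrite coef_fscale.
Qed.

Lemma hw_cons v a : hom_word c (v :: a) =
  [seq (c v w * q.1, w :: q.2) | w <- enum W, q <- hom_word c a].
Proof. by []. Qed.

Lemma hw_nil : hom_word c [::] = [:: (1, [::])].
Proof. by []. Qed.

Lemma coef_hw_cons v a b u :
  coef (hom_word c (v :: a)) (b :: u) = c v b * coef (hom_word c a) u.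
Proof.
rewrite hw_cons /coef big_allpairs_dep big_enum /=.
rewrite (bigD1 b) //= [X in _ + X]big1 ?addr0 => [|w wb]; last first.
  by rewrite big1 // => q _; rewrite eqseq_cons (negbTE wb).
rewrite mulr_sumr; apply: eq_bigr => q _; rewrite eqseq_cons eqxx /=.
by case: ifP; rewrite ?mulr0.
Qed.

Lemma coef_hw1 v b : coef (hom_word c [:: v]) [:: b] = c v b.
Proof. by rewrite coef_hw_cons hw_nil /coef big_seq1 eqxx mulr1. Qed.

Lemma coef_hw2 v v' a b : coef (hom_word c [:: v; v']) [:: a; b] = c v a * c v' b.
Proof. by rewrite coef_hw_cons coef_hw1. Qed.

End Hom.

Section Hom2.
Local Open Scope ring_scope.
Variables (F : fieldType) (V W : finType) (c : V -> W -> F).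

Definition pairs (x y : V -> F) : fsum F V :=
  [seq (x v * y w, [:: v; w]) | v <- enum V, w <- enum V].

Lemma coef_pairs x y u : coef (pairs x y) u = tw x y u.
Proof.
rewrite /coef big_allpairs_dep /=.
case: u => [|a [|b [|? ?]]] /=; try (by rewrite big1 // => v _; rewrite big1 // => w _; rewrite !eqseq_cons ?andbF).
all: cycle 1.
rewrite big_enum (bigD1 a) //= [X in _ + X]big1 ?addr0 => [|v va]; last first.
  by rewrite big1 // => w _; rewrite eqseq_cons (negbTE va).
rewrite big_enum (bigD1 b) //= [X in _ + X]big1 ?addr0 => [|w wb]; last first.
  by rewrite !eqseq_cons eqxx (negbTE wb).
by rewrite !eqxx.
Qed.

Lemma coef_hom_pairs x y u : coef (Defs.hom c (pairs x y)) u = tw (app c x) (app c y) u.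
Proof.
rewrite coef_hom big_allpairs_dep.
case: u => [|a [|b [|? ?]]]; rewrite [RHS]/=; try (by rewrite big1 // => v _; rewrite big1 // => w _;
  rewrite coef_hw_size ?mulr0).
rewrite /app mulr_suml big_enum; apply: eq_bigr => v _.
rewrite mulr_sumr big_enum; apply: eq_bigr => w _.
rewrite coef_hw2 /=; ring.
Qed.

Lemma coef_hom1 (s : fsum F V) b :
  coef (Defs.hom c s) [:: b] = \sum_a coef s [:: a] * c a b.
Proof.
rewrite coef_hom.
under [RHS]eq_bigr do rewrite /coef mulr_suml.
rewrite (exchange_big); apply: eq_bigr => p _.
case: p => k [|a0 [|? ?]].
- by rewrite coef_hw_size // mulr0 big1 // => a _ /=; rewrite mul0r.
- rewrite coef_hw1 (bigD1 a0) //= eqxx big1 ?addr0 // => a aa0.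
  by rewrite eqseq_cons eq_sym (negbTE aa0) mul0r.
- by rewrite coef_hw_size // mulr0 big1 // => a _ /=; rewrite eqseq_cons andbF mul0r.
Qed.

End Hom2.

Section Gen5.
Local Open Scope ring_scope.
Variables (F : fieldType) (d : Order.disp_t) (X : finPOrderType d) (r : X -> nat).
Local Notation V := (Vpos r).

Lemma one_neq0 : (true%:R : F) <> false%:R.
Proof. by move/eqP; rewrite mulr1n mulr0n oner_eq0. Qed.

Lemma sum_ev (f : V -> F) v : \sum_a (a == v)%:R * f a = f v.
Proof.
rewrite (bigD1 v) //= eqxx mul1r big1 ?addr0 // => a /negbTE ->; by rewrite mul0r.
Qed.

Lemma two_below (v : V) : is_rank r -> (2 <= r (val v))%N -> (1 < #|Sset (val v)|)%N ->
  exists w1 w2 : V, [/\ covers (val v) (val w1), covers (val v) (val w2) & w1 != w2].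
Proof.
move=> [Hr _] h2 /card_gt1P [z1 [z2 [h1 h2' n12]]]; rewrite !inE in h1 h2'.
have p1 : (0 < r z1)%N by move: h2; rewrite (Hr _ _ h1).
have p2 : (0 < r z2)%N by move: h2; rewrite (Hr _ _ h2').
exists (exist _ z1 p1), (exist _ z2 p2); split => //.
Qed.

Lemma two_below1 (v w : V) : is_rank r -> (2 <= r (val v))%N -> (1 < #|Sset (val v)|)%N ->
  exists w2 : V, covers (val v) (val w2) /\ w2 != w.
Proof.
move=> Hr h2 hc; have [w1 [w2 [c1 c2 n12]]] := two_below Hr h2 hc.
have [e|n1] := eqVneq w1 w; last by exists w1.
by exists w2; split => //; rewrite -e eq_sym.
Qed.

Lemma Cond_ev_false (v w1 w2 : V) : covers (val v) (val w1) -> covers (val v) (val w2) ->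
  w1 != w2 -> ~ Cond v (ev F w1).
Proof.
move=> c1 c2 n12 H; have := H w1 w2 c1 c2; rewrite /ev eqxx eq_sym (negbTE n12).
exact: one_neq0.
Qed.

Lemma Cond_ev_not (v w : V) : ~~ covers (val v) (val w) -> Cond v (ev F w).
Proof.
move=> nc w1 w2 c1 c2; rewrite /ev.
have -> : (w1 == w) = false by apply/eqP => e; move: nc; rewrite -e c1.
have -> : (w2 == w) = false by apply/eqP => e; move: nc; rewrite -e c2.
by [].
Qed.

Lemma cov_cond (v w : V) : (exists y : V -> F, ~ Cond v y) ->
  covers (val v) (val w) <-> ~ Cond v (ev F w).
Proof.
move=> [y ny]; split => [cw H|H].
  apply: ny => w1 w2 c1 c2.
  have e1 : w1 = w by have := H w w1 cw c1; rewrite /ev eqxx; case: eqP => // _ /one_neq0 [].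
  have e2 : w2 = w by have := H w w2 cw c2; rewrite /ev eqxx; case: eqP => // _ /one_neq0 [].
  by rewrite e1 e2.
by case cw: (covers (val v) (val w)) => //; exfalso; apply: H; apply: Cond_ev_not; rewrite cw.
Qed.

Lemma ev_Cond_Z (v : V) y : is_rank r -> Cond v y -> Z (ev F v) y.
Proof.
move=> Hr H; apply: cond_Z => // a; rewrite /ev; have [-> //|ne] := eqVneq a v; by rewrite mulr0n eqxx.
Qed.



End Gen5.

Section Ord.
Variables (d : Order.disp_t) (X : finPOrderType d).

Lemma lt_ind (R : X -> X -> Prop) :
  (forall a b, covers b a -> R a b) ->
  (forall a m b, (a < m)%O -> (m < b)%O -> R a m -> R m b -> R a b) ->
  forall x y, (x < y)%O -> R x y.
Proof.
move=> Hc Ht x y.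
suff: forall n x y, (#|[set z | (x < z)%O && (z < y)%O]| <= n)%N -> (x < y)%O -> R x y.
  by apply.
elim=> [|n IH] {}x {}y hn xy;
  case: (pickP (fun z => (x < z)%O && (z < y)%O)) => [z /andP[xz zy]|H].
- move: hn; rewrite leqn0 => /eqP/cards0_eq S0.
  have : z \in [set z | (x < z)%O && (z < y)%O] by rewrite inE xz zy.
  by rewrite S0 inE.
- apply: Hc; rewrite /covers xy /=; apply/forallP => w; by rewrite H.
- apply: (Ht x z y xz zy); apply: IH => //; rewrite -ltnS; apply: leq_trans hn;
  apply: proper_card; apply/properP; split.
  + apply/subsetP => w; rewrite !inE => /andP[h1 h2]; rewrite h1 /=; exact: lt_trans h2 zy.
  + by exists z; rewrite !inE ?xz ?zy ?ltxx ?andbF.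
  + apply/subsetP => w; rewrite !inE => /andP[h1 h2]; rewrite h2 andbT; exact: lt_trans xz h1.
  + by exists z; rewrite !inE ?xz ?zy ?ltxx.
- apply: Hc; rewrite /covers xy /=; apply/forallP => w; by rewrite H.
Qed.

Lemma rank_lt (r : X -> nat) : is_rank r -> forall x y, (x < y)%O -> (r x < r y)%N.
Proof.
move=> [Hr _]; apply: lt_ind => [a b /Hr ->//|a m b _ _]; exact: ltn_trans.
Qed.

End Ord.

Lemma mono_ge2 d1 (A : finPOrderType d1) (rA : A -> nat) d2 (B : finPOrderType d2) (rB : B -> nat)
  (g : Pge2 rA -> Pge2 rB) : is_rank rA ->
  (forall x y : Pge2 rA, covers (val x) (val y) -> covers (val (g x)) (val (g y))) ->
  forall x y : Pge2 rA, (val x <= val y)%O -> (val (g x) <= val (g y))%O.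
Proof.
move=> Hr Hc x y; rewrite le_eqVlt => /orP [/eqP e|lt].
  by rewrite (val_inj e).
case: x lt => a ha; case: y => b hb /= lt; apply: ltW.
pose R a b := forall (ha : (2 <= rA a)%N) (hb : (2 <= rA b)%N),
  (val (g (exist _ a ha)) < val (g (exist _ b hb)))%O.
suff: R a b by apply.
apply: lt_ind lt => [a' b' cba ha' hb'|a' m b' am mb Ram Rmb ha' hb'].
  by have /andP [] := Hc (exist _ b' hb') (exist _ a' ha') cba.
have hm : (2 <= rA m)%N by apply: leq_trans ha' (ltnW (rank_lt Hr am)).
exact: lt_trans (Ram ha' hm) (Rmb hm hb').
Qed.

Section Main.
Local Open Scope ring_scope.
Variables (F : fieldType) (d : Order.disp_t) (P : finPOrderType d) (rP : P -> nat)
  (d' : Order.disp_t) (Q : finPOrderType d') (rQ : Q -> nat).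
Local Notation V := (Vpos rP).
Local Notation W := (Vpos rQ).

Lemma inv_sum d1 (X1 : finPOrderType d1) (r1 : X1 -> nat) d2 (X2 : finPOrderType d2) (r2 : X2 -> nat)
  (c : Vpos r1 -> Vpos r2 -> F) (c' : Vpos r2 -> Vpos r1 -> F) v :
  eqB (Defs.hom c' (Defs.hom c [:: (1, [:: v])])) [:: (1, [:: v])] ->
  forall u, \sum_w c v w * c' w u = (u == v)%:R.
Proof.
move=> H u; have := in_ideal_len1 H u.
rewrite coef_cat coef_fscale coef_hom1.
have cY a : coef [:: (1 : F, [:: v])] [:: a] = (a == v)%:R.
  by rewrite /coef big_seq1 /= eqseq_cons andbT eq_sym; case: eqP.
rewrite cY mulN1r => /eqP; rewrite subr_eq0 => /eqP <-.
apply: eq_bigr => w _; rewrite coef_hom1; congr (_ * _).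
rewrite (bigD1 v) //= cY eqxx mul1r big1 ?addr0 // => a /negbTE na.
by rewrite cY na mul0r.
Qed.

Lemma app_inv (A B : finType) (c : A -> B -> F) (c' : B -> A -> F) :
  (forall v u, \sum_w c v w * c' w u = (u == v)%:R) ->
  forall y : A -> F, app c' (app c y) =1 y.
Proof.
move=> H y u; rewrite /app.
under eq_bigr do rewrite mulr_sumr.
rewrite exchange_big /=.
transitivity (\sum_v (u == v)%:R * y v).
  apply: eq_bigr => v _; rewrite -H mulr_suml; apply: eq_bigr => w _; ring.
rewrite (bigD1 u) //= eqxx mul1r big1 ?addr0 // => a na.
by rewrite eq_sym (negbTE na) mul0r.
Qed.

Lemma app_ev (A B : finType) (c : A -> B -> F) v : app c (fun a => (a == v)%:R) =1 c v.
Proof.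
move=> b; rewrite /app (bigD1 v) //= eqxx mulr1 big1 ?addr0 // => a /negbTE ->.
by rewrite mulr0.
Qed.

Lemma Z_transfer d1 (X1 : finPOrderType d1) (r1 : X1 -> nat) d2 (X2 : finPOrderType d2) (r2 : X2 -> nat)
  (c : Vpos r1 -> Vpos r2 -> F) :
  (forall x, in_ideal (coef x) -> in_ideal (coef (Defs.hom c x))) ->
  forall x y, Z x y -> Z (app c x) (app c y).
Proof.
move=> H x y Zxy; apply: in_ideal_ext (H _ (in_ideal_ext _ Zxy)) => u.
  exact: coef_hom_pairs.
by rewrite coef_pairs.
Qed.

Variables (c : V -> W -> F) (c' : W -> V -> F).
Hypotheses (HrP : is_rank rP) (HrQ : is_rank rQ) (Hnn : non_nesting P)
  (HS : forall p : P, (1 < rP p)%N -> (1 < #|Sset p|)%N)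
  (Hgr : forall v w, rP (val v) != rQ (val w) -> c v w = 0)
  (Hgr' : forall w v, rQ (val w) != rP (val v) -> c' w v = 0)
  (Hid : forall x, in_ideal (coef x) -> in_ideal (coef (Defs.hom c x)))
  (Hid' : forall y, in_ideal (coef y) -> in_ideal (coef (Defs.hom c' y)))
  (D1 : forall v u, \sum_w c v w * c' w u = (u == v)%:R)
  (D2 : forall w u, \sum_v c' w v * c v u = (u == w)%:R).

Lemma rank_eq v w : c v w != 0 -> rP (val v) = rQ (val w).
Proof. by apply: contraNeq => /Hgr ->. Qed.

Lemma rank_eq' w v : c' w v != 0 -> rQ (val w) = rP (val v).
Proof. by apply: contraNeq => /Hgr' ->. Qed.

Lemma lemL (p : V) (q : W) (v : V) : (2 <= rP (val p))%N -> c p q != 0 -> c' q v != 0 -> v = p.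
Proof.
move=> h2 cpq cqv; apply/eqP; apply/negPn/negP => vp.
have rpq := rank_eq cpq; have rqv := rank_eq' cqv.
have h2v : (2 <= rP (val v))%N by rewrite -rqv -rpq.
have Hsv := HS h2v; have Hsp := HS h2.
have nv : val v != val p by apply: contra vp => /eqP e; apply/eqP; apply: val_inj.
have /subsetPn [z zv zp] := Hnn nv Hsv Hsp.
rewrite !inE in zv zp.
have pz : (0 < rP z)%N by move: h2v; rewrite (proj1 HrP _ _ zv).
pose w : V := exist _ z pz.
have cvw : covers (val v) (val w) := zv.
have [w2 [cvw2 w2w]] := two_below1 w HrP h2v Hsv.
have C1 : Cond p (ev F w) by apply: Cond_ev_not.
have Z2 := Z_transfer Hid (ev_Cond_Z HrP C1).
have C2 : Cond q (app c (ev F w)).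
  by apply: (Z_cond Z2); rewrite /ev (app_ev c p q).
have Z4 := Z_transfer Hid' (ev_Cond_Z HrQ C2).
have C3 : Cond v (app c' (app c (ev F w))).
  by apply: (Z_cond Z4); rewrite /ev (app_ev c' q v).
have C4 : Cond v (ev F w) := Cond_ext (app_inv D1 _) C3.
by apply: (Cond_ev_false cvw cvw2 _ C4); rewrite eq_sym.
Qed.

Lemma sum_single (q : W) (p : V) (g : V -> F) : (forall v, c' q v != 0 -> v = p) ->
  \sum_v c' q v * g v = c' q p * g p.
Proof.
move=> H; rewrite (bigD1 p) //= big1 ?addr0 // => v vp.
have [/H e|/negPn/eqP->] := boolP (c' q v != 0); last by rewrite mul0r.
by move: vp; rewrite e eqxx.
Qed.

Lemma uniq_q (p : V) (q1 q2 : W) : (2 <= rP (val p))%N -> c p q1 != 0 -> c p q2 != 0 -> q1 = q2.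
Proof.
move=> h2 c1 c2; apply/eqP; apply/negPn/negP => n12.
have L2 : forall v, c' q2 v != 0 -> v = p by move=> v; apply: lemL.
have := D2 q2 q1; rewrite (sum_single _ L2) (negbTE n12) => /eqP.
rewrite mulr0n mulf_eq0 (negbTE c1) orbF => /eqP z.
have := D2 q2 q2; rewrite (sum_single _ L2) z mul0r eqxx.
by move=> /esym /one_neq0.
Qed.

Lemma exists_q (p : V) : exists q, c p q != 0.
Proof.
case: (pickP (fun w => c p w != 0)) => [q hq|h]; first by exists q.
exfalso; have := D1 p p; rewrite big1 ?eqxx => [/esym /one_neq0 //|w _].
by have /negbFE/eqP -> := h w; rewrite mul0r.
Qed.

Lemma exists_p (q : W) : exists p, c p q != 0.
Proof.
case: (pickP (fun v => c v q != 0)) => [p hp|h]; first by exists p.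
exfalso; have := D2 q q; rewrite big1 ?eqxx => [/esym /one_neq0 //|v _].
by have /negbFE/eqP -> := h v; rewrite mulr0.
Qed.

Lemma cqp_neq0 (p : V) (q : W) : (2 <= rP (val p))%N -> c p q != 0 -> c' q p != 0.
Proof.
move=> h2 cpq; have := D1 p p.
rewrite (bigD1 q) //= big1 ?addr0 => [|w wq]; last first.
  have [cw|/negPn/eqP->] := boolP (c p w != 0); last by rewrite mul0r.
  by move: wq; rewrite (uniq_q h2 cw cpq) eqxx.
rewrite eqxx => e; apply/eqP => z; move: e; rewrite z mulr0 => /esym /one_neq0 [].
Qed.

Lemma inj_p (p1 p2 : V) (q : W) : (2 <= rP (val p1))%N -> (2 <= rP (val p2))%N ->
  c p1 q != 0 -> c p2 q != 0 -> p1 = p2.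
Proof.
move=> h1 h2 c1 c2; symmetry; apply: (lemL h1 c1); exact: cqp_neq0.
Qed.

Lemma cond_transfer (p : V) (q : W) : (2 <= rP (val p))%N -> c p q != 0 ->
  forall y, Cond p y <-> Cond q (app c y).
Proof.
move=> h2 cpq y; split => H.
  apply: (Z_cond (Z_transfer Hid (ev_Cond_Z HrP H))); by rewrite /ev (app_ev c p q).
have Z1 := Z_transfer Hid' (ev_Cond_Z HrQ H).
have C : Cond p (app c' (app c y)).
  apply: (Z_cond Z1); rewrite /ev (app_ev c' q p); exact: cqp_neq0.
exact: Cond_ext (app_inv D1 _) C.
Qed.

Lemma notCond_P (p : V) : (2 <= rP (val p))%N -> exists y : V -> F, ~ Cond p y.
Proof.
move=> h2; have [w1 [w2 [c1 c2 n12]]] := two_below HrP h2 (HS h2).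
by exists (ev F w1); apply: Cond_ev_false c1 c2 n12.
Qed.

Lemma notCond_Q (p : V) (q : W) : (2 <= rP (val p))%N -> c p q != 0 ->
  exists y : W -> F, ~ Cond q y.
Proof.
move=> h2 cpq; have [y ny] := notCond_P h2.
by exists (app c y) => /(cond_transfer h2 cpq).
Qed.

Lemma cov_transfer (p p' : V) (q q' : W) : (2 <= rP (val p))%N -> (2 <= rP (val p'))%N ->
  c p q != 0 -> c p' q' != 0 ->
  covers (val p) (val p') = covers (val q) (val q').
Proof.
move=> h2 h2' cpq cpq'.
have E : forall b, app c (ev F p') b = c p' q' * ev F q' b.
  move=> b; rewrite /ev (app_ev c p' b).
  have [->|nb] := eqVneq b q'; first by rewrite mulr1.
  rewrite mulr0; apply/eqP; apply/negPn/negP => cb.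
  by move: nb; rewrite (uniq_q h2' cb cpq') eqxx.
have I1 := cov_cond p' (notCond_P h2).
have I2 := cov_cond q' (notCond_Q h2 cpq).
have I3 := cond_transfer h2 cpq (ev F p').
have I4 := Cond_scale q cpq' E.
apply/idP/idP => H.
  by apply/I2 => C; apply: (proj1 I1 H); apply/I3/I4.
by apply/I1 => C; apply: (proj1 I2 H); apply/I4/I3.
Qed.

Definition toV d1 (X1 : finPOrderType d1) (r1 : X1 -> nat) (x : Pge2 r1) : Vpos r1 :=
  exist _ (val x) (leq_trans (isT : (1 <= 2)%N) (valP x)).

Lemma main_core : exists f : Pge2 rP -> Pge2 rQ,
    bijective f /\
    (forall x y : Pge2 rP, (val (f x) <= val (f y))%O = (val x <= val y)%O) /\
    (forall x : Pge2 rP, rQ (val (f x)) = rP (val x)).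
Proof.
have Hf : forall x : Pge2 rP, exists y : Pge2 rQ, c (toV x) (toV y) != 0.
  move=> x; have [q hq] := exists_q (toV x).
  have hr : (2 <= rQ (val q))%N by rewrite -(rank_eq hq) (valP x).
  exists (exist _ (val q) hr).
  by have -> : toV (exist (fun z => (2 <= rQ z)%N) (val q) hr) = q by apply: val_inj.
have Hg : forall y : Pge2 rQ, exists x : Pge2 rP, c (toV x) (toV y) != 0.
  move=> y; have [p hp] := exists_p (toV y).
  have hr : (2 <= rP (val p))%N by rewrite (rank_eq hp) (valP y).
  exists (exist _ (val p) hr).
  by have -> : toV (exist (fun z => (2 <= rP z)%N) (val p) hr) = p by apply: val_inj.
pose f x := xchoose (Hf x); pose g y := xchoose (Hg y).
have fP x : c (toV x) (toV (f x)) != 0 := xchooseP (Hf x).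
have gP y : c (toV (g y)) (toV y) != 0 := xchooseP (Hg y).
have toV_inj d1 (X1 : finPOrderType d1) (r1 : X1 -> nat) : injective (@toV d1 X1 r1).
  by move=> a b /(congr1 val) /= /val_inj.
have fK : cancel f g.
  move=> x; apply: toV_inj; exact: (@inj_p (toV (g (f x))) (toV x) (toV (f x)) (valP (g (f x))) (valP x) (gP _) (fP _)).
have gK : cancel g f.
  move=> y; apply: toV_inj; exact: (@uniq_q (toV (g y)) (toV (f (g y))) (toV y) (valP (g y)) (fP _) (gP _)).
have covf x y : covers (val x) (val y) = covers (val (f x)) (val (f y)).
  exact: (@cov_transfer (toV x) (toV y) (toV (f x)) (toV (f y)) (valP x) (valP y) (fP x) (fP y)).
have covg x y : covers (val (g x)) (val (g y)) = covers (val x) (val y).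
  exact: (@cov_transfer (toV (g x)) (toV (g y)) (toV x) (toV y) (valP (g x)) (valP (g y)) (gP x) (gP y)).
exists f; split; first by exists g.
split.
  move=> x y; apply/idP/idP.
    move=> H; rewrite -(fK x) -(fK y); apply: (mono_ge2 (g := g) HrQ) => // a b.
    by rewrite covg.
  by apply: mono_ge2 => // a b; rewrite covf.
by move=> x; rewrite -(rank_eq (fP x)).
Qed.

End Main.

Unset Implicit Arguments. Set Strict Implicit. Set Printing Implicit Defensive.

Theorem mainTheorem15 (F : fieldType)
  d (P : finPOrderType d) (rP : P -> nat)
  d' (Q : finPOrderType d') (rQ : Q -> nat) :
  is_rank rP -> unique_minimal P -> non_nesting P ->
  (forall p : P, (1 < rP p)%N -> (1 < #|Sset p|)%N) ->
  is_rank rQ -> unique_minimal Q ->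
  B_iso F rP rQ ->
  exists f : Pge2 rP -> Pge2 rQ,
    bijective f /\
    (forall x y : Pge2 rP, (val (f x) <= val (f y))%O = (val x <= val y)%O) /\
    (forall x : Pge2 rP, rQ (val (f x)) = rP (val x)).
Proof.
move=> HrP _ Hnn HS HrQ _ [c [c' [Hgr [Hgr' [Hid [Hid' [Hi1 Hi2]]]]]]].
eapply main_core; eauto.
- by move=> v; apply: inv_sum (Hi1 v).
- by move=> w; apply: inv_sum (Hi2 w).
Qed.
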